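(* Let $\{G_k\}_{k\ge0}$ be a nonnegative real sequence with $G_0=G_1\ge0$ and $G_{k+1}\le\phi_1G_k+\phi_2G_{k-1}$ for all $k\ge1$, where $\phi_1,\phi_2\ge0$ and $\phi_1+\phi_2<1$. Let $\phi=\frac{-\phi_1+\sqrt{\phi_1^2+4\phi_2}}{2}$ (the largest root of $t^2+\phi_1t-\phi_2=0$) and $\rho=\phi+\phi_1$. Then: 1. $G_{k+1}\le(1+\phi)(\phi+\phi_1)^kG_0$ for all $k\ge1$. 2. With $R_1=\frac{1+\phi}{\phi+\rho}$, $R_2=\frac{1-\rho}{\phi+\rho}$, $R_3=\frac{\rho+\phi_2}{\phi+\rho}$, $R_4=\frac{\phi-\phi_2}{\phi+\rho}$: for $k\ge1$ even, $G_{k+1}\le(R_1\rho^{k+1}+R_2\phi^{k+1})G_0$ and $G_k\le(R_1\rho^k-R_2\phi^k)G_0$; for $k\ge1$ odd, $G_{k+1}\le(R_3\rho^k-R_4\phi^k)G_0$ and $G_k\le(R_3\rho^{k-1}+R_4\phi^{k-1})G_0$. Here $0\le\phi<1$ and $0<\rho<1$. *)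

(* Defs.v *)
From Stdlib Require Export Reals Arith.
Open Scope R_scope.

(* phi = largest root of t^2 + phi1 t - phi2 = 0 *)
Definition phi_of (phi1 phi2 : R) : R :=
  (- phi1 + sqrt (phi1 ^ 2 + 4 * phi2)) / 2.

Definition rho_of (phi1 phi2 : R) : R := phi_of phi1 phi2 + phi1.

(* Main.v *)
Require Import Defs.
From Stdlib Require Import Reals Arith Lra Lia Psatz.
Open Scope R_scope.

Lemma negpow_even (x : R) (m : nat) : (- x) ^ (2 * m) = x ^ (2 * m).
Proof. rewrite !pow_mult. f_equal. ring. Qed.

Lemma negpow_odd (x : R) (m : nat) : (- x) ^ (S (2 * m)) = - x ^ (S (2 * m)).
Proof. change ((- x) ^ (S (2 * m))) with (- x * (- x) ^ (2 * m)). change (x ^ (S (2 * m))) with (x * x ^ (2 * m)). rewrite negpow_even. ring. Qed.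

Theorem theorem1 (G : nat -> R) (phi1 phi2 : R)
  (hG : forall k, 0 <= G k)
  (hG01 : G 0%nat = G 1%nat) (hG0 : 0 <= G 0%nat)
  (hrec : forall k, (1 <= k)%nat -> G (S k) <= phi1 * G k + phi2 * G (k - 1)%nat)
  (hphi1 : 0 <= phi1) (hphi2 : 0 <= phi2) (hsum : phi1 + phi2 < 1)
  (hpos : 0 < phi1 + phi2) :
  let phi := phi_of phi1 phi2 in
  let rho := rho_of phi1 phi2 in
  let R1 := (1 + phi) / (phi + rho) in
  let R2 := (1 - rho) / (phi + rho) in
  let R3 := (rho + phi2) / (phi + rho) in
  let R4 := (phi - phi2) / (phi + rho) in
  (0 <= phi < 1 /\ 0 < rho < 1) /\
  (forall k, (1 <= k)%nat -> G (S k) <= (1 + phi) * (phi + phi1) ^ k * G 0%nat) /\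
  (forall k, (1 <= k)%nat -> Nat.Even k ->
     G (S k) <= (R1 * rho ^ (S k) + R2 * phi ^ (S k)) * G 0%nat /\
     G k <= (R1 * rho ^ k - R2 * phi ^ k) * G 0%nat) /\
  (forall k, (1 <= k)%nat -> Nat.Odd k ->
     G (S k) <= (R3 * rho ^ k - R4 * phi ^ k) * G 0%nat /\
     G k <= (R3 * rho ^ (k - 1) + R4 * phi ^ (k - 1)) * G 0%nat).
Proof.
  intros phi rho R1 R2 R3 R4.
  set (s := sqrt (phi1 ^ 2 + 4 * phi2)).
  assert (hs2 : s * s = phi1 ^ 2 + 4 * phi2).
  { unfold s. apply sqrt_sqrt. nra. }
  assert (hs0 : 0 <= s) by (unfold s; apply sqrt_pos).
  assert (ephi : phi = (s - phi1) / 2) by (unfold phi, phi_of; fold s; field).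
  assert (erho : rho = (s + phi1) / 2) by (unfold rho, rho_of, phi_of; fold s; field).
  assert (hsphi1 : phi1 <= s) by nra.
  assert (hs1 : s < 2 - phi1) by nra.
  assert (hspos : 0 < s + phi1) by nra.
  assert (hprod : phi * rho = phi2) by (rewrite ephi, erho; nra).
  assert (hrhoeq : rho = phi + phi1) by (rewrite ephi, erho; field).
  assert (hphi0 : 0 <= phi) by (rewrite ephi; lra).
  assert (hrho0 : 0 < rho) by (rewrite erho; lra).
  assert (hrho1 : rho < 1) by (rewrite erho; lra).
  assert (hpr : 0 < phi + rho) by lra.
  set (E := fun k => R1 * rho ^ k - R2 * (- phi) ^ k).
  assert (hE0 : E 0%nat = 1) by (unfold E, R1, R2; simpl; field; lra).
  assert (hE1 : E 1%nat = 1) by (unfold E, R1, R2; simpl; field; lra).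
  assert (hErec : forall k, E (S (S k)) = phi1 * E (S k) + phi2 * E k).
  { intro k. unfold E. simpl.
    assert (E2 : R1 * (rho * (rho * rho ^ k)) - R2 * (- phi * (- phi * (- phi) ^ k))
      - (phi1 * (R1 * (rho * rho ^ k) - R2 * (- phi * (- phi) ^ k)) +
         phi2 * (R1 * rho ^ k - R2 * (- phi) ^ k))
      = R1 * rho ^ k * (rho * rho - phi1 * rho - phi2)
        - R2 * (- phi) ^ k * (phi * phi + phi1 * phi - phi2)) by ring.
    assert (Z1 : rho * rho - phi1 * rho - phi2 = 0) by (rewrite <- hprod, hrhoeq; ring).
    assert (Z2 : phi * phi + phi1 * phi - phi2 = 0) by (rewrite <- hprod, hrhoeq; ring).
    rewrite Z1, Z2 in E2. lra. }
  assert (hGE : forall k, G k <= E k * G 0%nat /\ G (S k) <= E (S k) * G 0%nat).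
  { induction k as [|k [IH1 IH2]].
    - rewrite hE0, hE1. lra.
    - split; [exact IH2|].
      assert (h := hrec (S k) ltac:(lia)). replace (S k - 1)%nat with k in h by lia.
      rewrite hErec. nra. }
  assert (hH : forall k, G (S k) + phi * G k <= (1 + phi) * rho ^ k * G 0%nat).
  { induction k as [|k IH].
    - simpl. rewrite <- hG01. lra.
    - assert (h := hrec (S k) ltac:(lia)). replace (S k - 1)%nat with k in h by lia.
      simpl.
      assert (G (S (S k)) + phi * G (S k) <= rho * (G (S k) + phi * G k)).
      { rewrite <- hprod in h. rewrite hrhoeq in *. nra. }
      nra. }
  split; [split; split; lra|].
  split.
  { intros k _. rewrite <- hrhoeq. specialize (hH k). specialize (hG k). nra. }
  split.
  - intros k _ [m ->]. destruct (hGE (2 * m)%nat) as [A B].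
    unfold E in A, B. rewrite negpow_even in A. rewrite negpow_odd in B.
    split; lra.
  - intros k _ [m ->]. replace (2 * m + 1)%nat with (S (2 * m)) by lia.
    replace (S (2 * m) - 1)%nat with (2 * m)%nat by lia.
    destruct (hGE (S (2 * m))) as [A B].
    unfold E in A, B. rewrite negpow_odd in A.
    replace (S (S (2 * m))) with (2 * S m)%nat in B by lia.
    rewrite negpow_even in B. replace (2 * S m)%nat with (S (S (2 * m))) in B by lia.
    assert (e3 : R3 * rho ^ S (2 * m) = R1 * rho ^ S (S (2 * m))).
    { unfold R3, R1. simpl. rewrite <- hprod. field. lra. }
    assert (e4 : R4 * phi ^ S (2 * m) = R2 * phi ^ S (S (2 * m))).
    { unfold R4, R2. simpl. rewrite <- hprod. field. lra. }
    assert (e5 : R3 * rho ^ (2 * m) = R1 * rho ^ S (2 * m)).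
    { unfold R3, R1. simpl. rewrite <- hprod. field. lra. }
    assert (e6 : R4 * phi ^ (2 * m) = R2 * phi ^ S (2 * m)).
    { unfold R4, R2. simpl. rewrite <- hprod. field. lra. }
    rewrite e3, e4, e5, e6. split; lra.
Qed.
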